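(* For every integer $n\ge 3$, the disjunctive domination number of the torus grid graph $C_3\Box C_n$ is $$\gamma_2^d(C_3\Box C_n)=\left\lceil \frac{n}{2}\right\rceil.$$
   Context: $C_k$ denotes the cycle on $k$ vertices, and $G\Box H$ is the Cartesian product: vertex set $V(G)\times V(H)$, with $(g,h)\sim(g',h')$ iff either $g=g'$ and $hh'\in E(H)$, or $h=h'$ and $gg'\in E(G)$. For a simple graph $\Gamma$ and a vertex $v$, let $\Gamma(v)$ be the set of vertices at distance $1$ from $v$ and $\Gamma_2(v)$ the set of vertices at distance exactly $2$ from $v$. A set $S\subseteq V(\Gamma)$ is a disjunctive dominating set if every vertex $v\notin S$ satisfies $|\Gamma(v)\cap S|\ge 1$ or $|\Gamma_2(v)\cap S|\ge 2$. The disjunctive domination number $\gamma_2^d(\Gamma)$ is the minimum cardinality of a disjunctive dominating set of $\Gamma$. *)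

(* Defs.v *)
From mathcomp Require Import all_boot all_order.
Set Implicit Arguments. Unset Strict Implicit. Unset Printing Implicit Defensive.

(* A simple graph on a finite type T is given by a symmetric irreflexive
   boolean relation e. *)

(* Cycle C_k on vertex set 'I_k: i ~ j iff j = i+1 mod k or i = j+1 mod k,
   and i <> j (irreflexive; relevant only for degenerate k). *)
Definition cycle_adj (k : nat) : rel 'I_k :=
  fun i j => (i != j) && ((j == (i.+1 %% k) :> nat) || (i == (j.+1 %% k) :> nat)).

Definition cart_adj (T U : finType) (g : rel T) (h : rel U) : rel (T * U) :=
  fun x y => ((x.1 == y.1) && h x.2 y.2) || ((x.2 == y.2) && g x.1 y.1).

Definition nbhd (T : finType) (e : rel T) (v : T) : {set T} :=
  [set u | e v u].

Definition nbhd2 (T : finType) (e : rel T) (v : T) : {set T} :=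
  [set u | (u != v) && ~~ e v u && [exists w, e v w && e w u]].

Definition disj_dominating (T : finType) (e : rel T) (S : {set T}) : bool :=
  [forall v, (v \notin S) ==>
     ((0 < #|nbhd e v :&: S|) || (2 <= #|nbhd2 e v :&: S|))].

(* Minimum cardinality of a disjunctive dominating set (setT is always one). *)
Definition disj_dom_number (T : finType) (e : rel T) : nat :=
  \big[minn/#|T|]_(S : {set T} | disj_dominating e S) #|S|.


Definition torus_3n (n : nat) : rel ('I_3 * 'I_n) :=
  cart_adj (@cycle_adj 3) (@cycle_adj n).
Arguments torus_3n : clear implicits.

(* Main.v *)
Require Import Defs.
From mathcomp Require Import all_boot all_order zify.

Set Implicit Arguments. Unset Strict Implicit. Unset Printing Implicit Defensive.

Definition o0 : 'I_3 := @Ordinal 3 0 isT.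
Definition o1 : 'I_3 := @Ordinal 3 1 isT.
Definition o2 : 'I_3 := @Ordinal 3 2 isT.
Definition ords3 : seq 'I_3 := [:: o0; o1; o2].

Definition col := (bool * bool * bool)%type.
Definition code (c : col) : nat := let: (x, y, z) := c in x + 2 * y + 4 * z.
Definition get (c : col) (a : 'I_3) : bool :=
  let: (x, y, z) := c in if val a == 0 then x else if val a == 1 then y else z.
Definition wt (c : col) : nat := let: (x, y, z) := c in x + y + z.
Definition cond (c0 c1 c2 c3 c4 : col) (a : 'I_3) : bool :=
  [|| get c2 a, get c1 a, get c3 a, has (fun b => (b != a) && get c2 b) ords3
   | 2 <= get c0 a + get c4 a + count (fun b => (b != a) && get c1 b) ords3
          + count (fun b => (b != a) && get c3 b) ords3].
Definition validc c0 c1 c2 c3 c4 := all (cond c0 c1 c2 c3 c4) ords3.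
Definition phi_tab : seq (seq (seq (seq nat))) :=
[:: [:: [:: [:: 3; 3; 3; 3; 3; 3; 3; 3]; [:: 1; 3; 3; 3; 3; 3; 3; 3]; [:: 1; 3; 3; 3; 3; 3; 3; 3]; [:: 2; 3; 3; 3; 3; 3; 3; 3]; [:: 1; 3; 3; 3; 3; 3; 3; 3]; [:: 2; 3; 3; 3; 3; 3; 3; 3]; [:: 2; 3; 3; 3; 3; 3; 3; 3]; [:: 2; 3; 3; 3; 3; 3; 3; 3]]; [:: [:: 0; 2; 2; 3; 2; 3; 3; 3]; [:: 2; 3; 3; 3; 3; 3; 3; 3]; [:: 2; 3; 3; 3; 3; 3; 3; 3]; [:: 2; 3; 3; 3; 3; 3; 3; 3]; [:: 2; 3; 3; 3; 3; 3; 3; 3]; [:: 2; 3; 3; 3; 3; 3; 3; 3]; [:: 2; 3; 3; 3; 3; 3; 3; 3]; [:: 2; 3; 3; 3; 3; 3; 3; 3]]; [:: [:: 0; 2; 2; 3; 2; 3; 3; 3]; [:: 2; 3; 3; 3; 3; 3; 3; 3]; [:: 2; 3; 3; 3; 3; 3; 3; 3]; [:: 2; 3; 3; 3; 3; 3; 3; 3]; [:: 2; 3; 3; 3; 3; 3; 3; 3]; [:: 2; 3; 3; 3; 3; 3; 3; 3]; [:: 2; 3; 3; 3; 3; 3; 3; 3]; [:: 2; 3; 3; 3; 3; 3; 3; 3]]; [:: [:: 1; 3; 3; 3; 3; 3; 3; 3]; [:: 2; 3; 3; 3; 3; 3; 3; 3]; [:: 2; 3; 3; 3; 3; 3; 3;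 3]; [:: 2; 3; 3; 3; 3; 3; 3; 3]; [:: 2; 3; 3; 3; 3; 3; 3; 3]; [:: 2; 3; 3; 3; 3; 3; 3; 3]; [:: 2; 3; 3; 3; 3; 3; 3; 3]; [:: 2; 3; 3; 3; 3; 3; 3; 3]]; [:: [:: 0; 2; 2; 3; 2; 3; 3; 3]; [:: 2; 3; 3; 3; 3; 3; 3; 3]; [:: 2; 3; 3; 3; 3; 3; 3; 3]; [:: 2; 3; 3; 3; 3; 3; 3; 3]; [:: 2; 3; 3; 3; 3; 3; 3; 3]; [:: 2; 3; 3; 3; 3; 3; 3; 3]; [:: 2; 3; 3; 3; 3; 3; 3; 3]; [:: 2; 3; 3; 3; 3; 3; 3; 3]]; [:: [:: 1; 3; 3; 3; 3; 3; 3; 3]; [:: 2; 3; 3; 3; 3; 3; 3; 3]; [:: 2; 3; 3; 3; 3; 3; 3; 3]; [:: 2; 3; 3; 3; 3; 3; 3; 3]; [:: 2; 3; 3; 3; 3; 3; 3; 3]; [:: 2; 3; 3; 3; 3; 3; 3; 3]; [:: 2; 3; 3; 3; 3; 3; 3; 3]; [:: 2; 3; 3; 3; 3; 3; 3; 3]]; [:: [:: 1; 3; 3; 3; 3; 3; 3; 3]; [:: 2; 3; 3; 3; 3; 3; 3; 3]; [:: 2; 3; 3; 3; 3; 3; 3; 3]; [:: 2; 3; 3; 3; 3; 3; 3; 3]; [:: 2; 3; 3; 3; 3; 3; 3; 3]; [:: 2; 3; 3; 3; 3; 3; 3; 3]; [:: 2; 3; 3; 3; 3; 3; 3; 3]; [::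 2; 3; 3; 3; 3; 3; 3; 3]]; [:: [:: 1; 3; 3; 3; 3; 3; 3; 3]; [:: 2; 3; 3; 3; 3; 3; 3; 3]; [:: 2; 3; 3; 3; 3; 3; 3; 3]; [:: 2; 3; 3; 3; 3; 3; 3; 3]; [:: 2; 3; 3; 3; 3; 3; 3; 3]; [:: 2; 3; 3; 3; 3; 3; 3; 3]; [:: 2; 3; 3; 3; 3; 3; 3; 3]; [:: 2; 3; 3; 3; 3; 3; 3; 3]]]; [:: [:: [:: 0; 2; 2; 3; 2; 3; 3; 3]; [:: 1; 3; 3; 3; 3; 3; 3; 3]; [:: 1; 3; 3; 3; 3; 3; 3; 3]; [:: 2; 3; 3; 3; 3; 3; 3; 3]; [:: 1; 3; 3; 3; 3; 3; 3; 3]; [:: 2; 3; 3; 3; 3; 3; 3; 3]; [:: 2; 3; 3; 3; 3; 3; 3; 3]; [:: 2; 3; 3; 3; 3; 3; 3; 3]]; [:: [:: 1; 3; 3; 3; 3; 3; 3; 3]; [:: 2; 3; 3; 3; 3; 3; 3; 3]; [:: 2; 3; 3; 3; 3; 3; 3; 3]; [:: 2; 3; 3; 3; 3; 3; 3; 3]; [:: 2; 3; 3; 3; 3; 3; 3; 3]; [:: 2; 3; 3; 3; 3; 3; 3; 3]; [:: 2; 3; 3; 3; 3; 3; 3; 3]; [:: 2; 3; 3; 3; 3; 3; 3; 3]]; [:: [:: 1; 3; 3; 3; 3; 3; 3; 3]; [:: 2; 3; 3; 3; 3; 3; 3; 3]; [:: 2; 3; 3; 3; 3; 3; 3; 3];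 [:: 2; 3; 3; 3; 3; 3; 3; 3]; [:: 2; 3; 3; 3; 3; 3; 3; 3]; [:: 2; 3; 3; 3; 3; 3; 3; 3]; [:: 2; 3; 3; 3; 3; 3; 3; 3]; [:: 2; 3; 3; 3; 3; 3; 3; 3]]; [:: [:: 1; 3; 3; 3; 3; 3; 3; 3]; [:: 2; 3; 3; 3; 3; 3; 3; 3]; [:: 2; 3; 3; 3; 3; 3; 3; 3]; [:: 2; 3; 3; 3; 3; 3; 3; 3]; [:: 2; 3; 3; 3; 3; 3; 3; 3]; [:: 2; 3; 3; 3; 3; 3; 3; 3]; [:: 2; 3; 3; 3; 3; 3; 3; 3]; [:: 2; 3; 3; 3; 3; 3; 3; 3]]; [:: [:: 1; 3; 3; 3; 3; 3; 3; 3]; [:: 2; 3; 3; 3; 3; 3; 3; 3]; [:: 2; 3; 3; 3; 3; 3; 3; 3]; [:: 2; 3; 3; 3; 3; 3; 3; 3]; [:: 2; 3; 3; 3; 3; 3; 3; 3]; [:: 2; 3; 3; 3; 3; 3; 3; 3]; [:: 2; 3; 3; 3; 3; 3; 3; 3]; [:: 2; 3; 3; 3; 3; 3; 3; 3]]; [:: [:: 1; 3; 3; 3; 3; 3; 3; 3]; [:: 2; 3; 3; 3; 3; 3; 3; 3]; [:: 2; 3; 3; 3; 3; 3; 3; 3]; [:: 2; 3; 3; 3; 3; 3; 3; 3]; [:: 2; 3; 3; 3; 3; 3; 3; 3]; [:: 2; 3; 3; 3; 3; 3; 3; 3]; [:: 2; 3; 3; 3; 3; 3; 3; 3]; [:: 2;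 3; 3; 3; 3; 3; 3; 3]]; [:: [:: 1; 3; 3; 3; 3; 3; 3; 3]; [:: 2; 3; 3; 3; 3; 3; 3; 3]; [:: 2; 3; 3; 3; 3; 3; 3; 3]; [:: 2; 3; 3; 3; 3; 3; 3; 3]; [:: 2; 3; 3; 3; 3; 3; 3; 3]; [:: 2; 3; 3; 3; 3; 3; 3; 3]; [:: 2; 3; 3; 3; 3; 3; 3; 3]; [:: 2; 3; 3; 3; 3; 3; 3; 3]]; [:: [:: 1; 3; 3; 3; 3; 3; 3; 3]; [:: 2; 3; 3; 3; 3; 3; 3; 3]; [:: 2; 3; 3; 3; 3; 3; 3; 3]; [:: 2; 3; 3; 3; 3; 3; 3; 3]; [:: 2; 3; 3; 3; 3; 3; 3; 3]; [:: 2; 3; 3; 3; 3; 3; 3; 3]; [:: 2; 3; 3; 3; 3; 3; 3; 3]; [:: 2; 3; 3; 3; 3; 3; 3; 3]]]; [:: [:: [:: 0; 2; 2; 3; 2; 3; 3; 3]; [:: 1; 3; 3; 3; 3; 3; 3; 3]; [:: 1; 3; 3; 3; 3; 3; 3; 3]; [:: 2; 3; 3; 3; 3; 3; 3; 3]; [:: 1; 3; 3; 3; 3; 3; 3; 3]; [:: 2; 3; 3; 3; 3; 3; 3; 3]; [:: 2; 3; 3; 3; 3; 3; 3; 3]; [:: 2; 3; 3; 3; 3; 3; 3; 3]]; [:: [:: 1; 3; 3; 3; 3; 3; 3; 3]; [:: 2; 3; 3; 3; 3; 3; 3; 3]; [:: 2; 3; 3; 3; 3; 3; 3; 3]; [::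 2; 3; 3; 3; 3; 3; 3; 3]; [:: 2; 3; 3; 3; 3; 3; 3; 3]; [:: 2; 3; 3; 3; 3; 3; 3; 3]; [:: 2; 3; 3; 3; 3; 3; 3; 3]; [:: 2; 3; 3; 3; 3; 3; 3; 3]]; [:: [:: 1; 3; 3; 3; 3; 3; 3; 3]; [:: 2; 3; 3; 3; 3; 3; 3; 3]; [:: 2; 3; 3; 3; 3; 3; 3; 3]; [:: 2; 3; 3; 3; 3; 3; 3; 3]; [:: 2; 3; 3; 3; 3; 3; 3; 3]; [:: 2; 3; 3; 3; 3; 3; 3; 3]; [:: 2; 3; 3; 3; 3; 3; 3; 3]; [:: 2; 3; 3; 3; 3; 3; 3; 3]]; [:: [:: 1; 3; 3; 3; 3; 3; 3; 3]; [:: 2; 3; 3; 3; 3; 3; 3; 3]; [:: 2; 3; 3; 3; 3; 3; 3; 3]; [:: 2; 3; 3; 3; 3; 3; 3; 3]; [:: 2; 3; 3; 3; 3; 3; 3; 3]; [:: 2; 3; 3; 3; 3; 3; 3; 3]; [:: 2; 3; 3; 3; 3; 3; 3; 3]; [:: 2; 3; 3; 3; 3; 3; 3; 3]]; [:: [:: 1; 3; 3; 3; 3; 3; 3; 3]; [:: 2; 3; 3; 3; 3; 3; 3; 3]; [:: 2; 3; 3; 3; 3; 3; 3; 3]; [:: 2; 3; 3; 3; 3; 3; 3; 3]; [:: 2; 3; 3; 3; 3; 3; 3; 3]; [:: 2; 3; 3; 3; 3; 3; 3; 3]; [:: 2; 3; 3; 3; 3; 3; 3; 3]; [:: 2; 3;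 3; 3; 3; 3; 3; 3]]; [:: [:: 1; 3; 3; 3; 3; 3; 3; 3]; [:: 2; 3; 3; 3; 3; 3; 3; 3]; [:: 2; 3; 3; 3; 3; 3; 3; 3]; [:: 2; 3; 3; 3; 3; 3; 3; 3]; [:: 2; 3; 3; 3; 3; 3; 3; 3]; [:: 2; 3; 3; 3; 3; 3; 3; 3]; [:: 2; 3; 3; 3; 3; 3; 3; 3]; [:: 2; 3; 3; 3; 3; 3; 3; 3]]; [:: [:: 1; 3; 3; 3; 3; 3; 3; 3]; [:: 2; 3; 3; 3; 3; 3; 3; 3]; [:: 2; 3; 3; 3; 3; 3; 3; 3]; [:: 2; 3; 3; 3; 3; 3; 3; 3]; [:: 2; 3; 3; 3; 3; 3; 3; 3]; [:: 2; 3; 3; 3; 3; 3; 3; 3]; [:: 2; 3; 3; 3; 3; 3; 3; 3]; [:: 2; 3; 3; 3; 3; 3; 3; 3]]; [:: [:: 1; 3; 3; 3; 3; 3; 3; 3]; [:: 2; 3; 3; 3; 3; 3; 3; 3]; [:: 2; 3; 3; 3; 3; 3; 3; 3]; [:: 2; 3; 3; 3; 3; 3; 3; 3]; [:: 2; 3; 3; 3; 3; 3; 3; 3]; [:: 2; 3; 3; 3; 3; 3; 3; 3]; [:: 2; 3; 3; 3; 3; 3; 3; 3]; [:: 2; 3; 3; 3; 3; 3; 3; 3]]]; [:: [:: [:: 0; 2; 2; 3; 2; 3; 3; 3]; [:: 2; 3; 3; 3; 3; 3; 3; 3]; [:: 2; 3; 3; 3; 3; 3; 3; 3]; [:: 2;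 3; 3; 3; 3; 3; 3; 3]; [:: 2; 3; 3; 3; 3; 3; 3; 3]; [:: 2; 3; 3; 3; 3; 3; 3; 3]; [:: 2; 3; 3; 3; 3; 3; 3; 3]; [:: 2; 3; 3; 3; 3; 3; 3; 3]]; [:: [:: 1; 3; 3; 3; 3; 3; 3; 3]; [:: 2; 3; 3; 3; 3; 3; 3; 3]; [:: 2; 3; 3; 3; 3; 3; 3; 3]; [:: 2; 3; 3; 3; 3; 3; 3; 3]; [:: 2; 3; 3; 3; 3; 3; 3; 3]; [:: 2; 3; 3; 3; 3; 3; 3; 3]; [:: 2; 3; 3; 3; 3; 3; 3; 3]; [:: 2; 3; 3; 3; 3; 3; 3; 3]]; [:: [:: 1; 3; 3; 3; 3; 3; 3; 3]; [:: 2; 3; 3; 3; 3; 3; 3; 3]; [:: 2; 3; 3; 3; 3; 3; 3; 3]; [:: 2; 3; 3; 3; 3; 3; 3; 3]; [:: 2; 3; 3; 3; 3; 3; 3; 3]; [:: 2; 3; 3; 3; 3; 3; 3; 3]; [:: 2; 3; 3; 3; 3; 3; 3; 3]; [:: 2; 3; 3; 3; 3; 3; 3; 3]]; [:: [:: 1; 3; 3; 3; 3; 3; 3; 3]; [:: 2; 3; 3; 3; 3; 3; 3; 3]; [:: 2; 3; 3; 3; 3; 3; 3; 3]; [:: 2; 3; 3; 3; 3; 3; 3; 3]; [:: 2; 3; 3; 3; 3; 3; 3; 3]; [:: 2; 3; 3; 3; 3; 3; 3; 3]; [:: 2; 3; 3; 3; 3; 3; 3; 3]; [:: 2; 3; 3;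 3; 3; 3; 3; 3]]; [:: [:: 1; 3; 3; 3; 3; 3; 3; 3]; [:: 2; 3; 3; 3; 3; 3; 3; 3]; [:: 2; 3; 3; 3; 3; 3; 3; 3]; [:: 2; 3; 3; 3; 3; 3; 3; 3]; [:: 2; 3; 3; 3; 3; 3; 3; 3]; [:: 2; 3; 3; 3; 3; 3; 3; 3]; [:: 2; 3; 3; 3; 3; 3; 3; 3]; [:: 2; 3; 3; 3; 3; 3; 3; 3]]; [:: [:: 1; 3; 3; 3; 3; 3; 3; 3]; [:: 2; 3; 3; 3; 3; 3; 3; 3]; [:: 2; 3; 3; 3; 3; 3; 3; 3]; [:: 2; 3; 3; 3; 3; 3; 3; 3]; [:: 2; 3; 3; 3; 3; 3; 3; 3]; [:: 2; 3; 3; 3; 3; 3; 3; 3]; [:: 2; 3; 3; 3; 3; 3; 3; 3]; [:: 2; 3; 3; 3; 3; 3; 3; 3]]; [:: [:: 1; 3; 3; 3; 3; 3; 3; 3]; [:: 2; 3; 3; 3; 3; 3; 3; 3]; [:: 2; 3; 3; 3; 3; 3; 3; 3]; [:: 2; 3; 3; 3; 3; 3; 3; 3]; [:: 2; 3; 3; 3; 3; 3; 3; 3]; [:: 2; 3; 3; 3; 3; 3; 3; 3]; [:: 2; 3; 3; 3; 3; 3; 3; 3]; [:: 2; 3; 3; 3; 3; 3; 3; 3]]; [:: [:: 1; 3; 3; 3; 3; 3; 3; 3]; [:: 2; 3; 3; 3; 3; 3; 3; 3]; [:: 2; 3; 3; 3; 3; 3; 3; 3]; [:: 2; 3; 3;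 3; 3; 3; 3; 3]; [:: 2; 3; 3; 3; 3; 3; 3; 3]; [:: 2; 3; 3; 3; 3; 3; 3; 3]; [:: 2; 3; 3; 3; 3; 3; 3; 3]; [:: 2; 3; 3; 3; 3; 3; 3; 3]]]; [:: [:: [:: 0; 2; 2; 3; 2; 3; 3; 3]; [:: 1; 3; 3; 3; 3; 3; 3; 3]; [:: 1; 3; 3; 3; 3; 3; 3; 3]; [:: 2; 3; 3; 3; 3; 3; 3; 3]; [:: 1; 3; 3; 3; 3; 3; 3; 3]; [:: 2; 3; 3; 3; 3; 3; 3; 3]; [:: 2; 3; 3; 3; 3; 3; 3; 3]; [:: 2; 3; 3; 3; 3; 3; 3; 3]]; [:: [:: 1; 3; 3; 3; 3; 3; 3; 3]; [:: 2; 3; 3; 3; 3; 3; 3; 3]; [:: 2; 3; 3; 3; 3; 3; 3; 3]; [:: 2; 3; 3; 3; 3; 3; 3; 3]; [:: 2; 3; 3; 3; 3; 3; 3; 3]; [:: 2; 3; 3; 3; 3; 3; 3; 3]; [:: 2; 3; 3; 3; 3; 3; 3; 3]; [:: 2; 3; 3; 3; 3; 3; 3; 3]]; [:: [:: 1; 3; 3; 3; 3; 3; 3; 3]; [:: 2; 3; 3; 3; 3; 3; 3; 3]; [:: 2; 3; 3; 3; 3; 3; 3; 3]; [:: 2; 3; 3; 3; 3; 3; 3; 3]; [:: 2; 3; 3; 3; 3; 3; 3; 3]; [:: 2; 3; 3; 3; 3; 3; 3; 3]; [:: 2; 3; 3; 3; 3; 3; 3; 3]; [:: 2; 3; 3;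 3; 3; 3; 3; 3]]; [:: [:: 1; 3; 3; 3; 3; 3; 3; 3]; [:: 2; 3; 3; 3; 3; 3; 3; 3]; [:: 2; 3; 3; 3; 3; 3; 3; 3]; [:: 2; 3; 3; 3; 3; 3; 3; 3]; [:: 2; 3; 3; 3; 3; 3; 3; 3]; [:: 2; 3; 3; 3; 3; 3; 3; 3]; [:: 2; 3; 3; 3; 3; 3; 3; 3]; [:: 2; 3; 3; 3; 3; 3; 3; 3]]; [:: [:: 1; 3; 3; 3; 3; 3; 3; 3]; [:: 2; 3; 3; 3; 3; 3; 3; 3]; [:: 2; 3; 3; 3; 3; 3; 3; 3]; [:: 2; 3; 3; 3; 3; 3; 3; 3]; [:: 2; 3; 3; 3; 3; 3; 3; 3]; [:: 2; 3; 3; 3; 3; 3; 3; 3]; [:: 2; 3; 3; 3; 3; 3; 3; 3]; [:: 2; 3; 3; 3; 3; 3; 3; 3]]; [:: [:: 1; 3; 3; 3; 3; 3; 3; 3]; [:: 2; 3; 3; 3; 3; 3; 3; 3]; [:: 2; 3; 3; 3; 3; 3; 3; 3]; [:: 2; 3; 3; 3; 3; 3; 3; 3]; [:: 2; 3; 3; 3; 3; 3; 3; 3]; [:: 2; 3; 3; 3; 3; 3; 3; 3]; [:: 2; 3; 3; 3; 3; 3; 3; 3]; [:: 2; 3; 3; 3; 3; 3; 3; 3]]; [:: [:: 1; 3; 3; 3; 3; 3; 3; 3]; [:: 2; 3; 3; 3; 3; 3; 3; 3]; [:: 2; 3; 3; 3; 3; 3; 3; 3]; [:: 2; 3; 3;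 3; 3; 3; 3; 3]; [:: 2; 3; 3; 3; 3; 3; 3; 3]; [:: 2; 3; 3; 3; 3; 3; 3; 3]; [:: 2; 3; 3; 3; 3; 3; 3; 3]; [:: 2; 3; 3; 3; 3; 3; 3; 3]]; [:: [:: 1; 3; 3; 3; 3; 3; 3; 3]; [:: 2; 3; 3; 3; 3; 3; 3; 3]; [:: 2; 3; 3; 3; 3; 3; 3; 3]; [:: 2; 3; 3; 3; 3; 3; 3; 3]; [:: 2; 3; 3; 3; 3; 3; 3; 3]; [:: 2; 3; 3; 3; 3; 3; 3; 3]; [:: 2; 3; 3; 3; 3; 3; 3; 3]; [:: 2; 3; 3; 3; 3; 3; 3; 3]]]; [:: [:: [:: 0; 2; 2; 3; 2; 3; 3; 3]; [:: 2; 3; 3; 3; 3; 3; 3; 3]; [:: 2; 3; 3; 3; 3; 3; 3; 3]; [:: 2; 3; 3; 3; 3; 3; 3; 3]; [:: 2; 3; 3; 3; 3; 3; 3; 3]; [:: 2; 3; 3; 3; 3; 3; 3; 3]; [:: 2; 3; 3; 3; 3; 3; 3; 3]; [:: 2; 3; 3; 3; 3; 3; 3; 3]]; [:: [:: 1; 3; 3; 3; 3; 3; 3; 3]; [:: 2; 3; 3; 3; 3; 3; 3; 3]; [:: 2; 3; 3; 3; 3; 3; 3; 3]; [:: 2; 3; 3; 3; 3; 3; 3; 3]; [:: 2; 3; 3; 3; 3; 3; 3; 3]; [:: 2; 3; 3; 3; 3; 3; 3; 3]; [:: 2; 3; 3; 3; 3; 3; 3; 3]; [:: 2; 3; 3;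 3; 3; 3; 3; 3]]; [:: [:: 1; 3; 3; 3; 3; 3; 3; 3]; [:: 2; 3; 3; 3; 3; 3; 3; 3]; [:: 2; 3; 3; 3; 3; 3; 3; 3]; [:: 2; 3; 3; 3; 3; 3; 3; 3]; [:: 2; 3; 3; 3; 3; 3; 3; 3]; [:: 2; 3; 3; 3; 3; 3; 3; 3]; [:: 2; 3; 3; 3; 3; 3; 3; 3]; [:: 2; 3; 3; 3; 3; 3; 3; 3]]; [:: [:: 1; 3; 3; 3; 3; 3; 3; 3]; [:: 2; 3; 3; 3; 3; 3; 3; 3]; [:: 2; 3; 3; 3; 3; 3; 3; 3]; [:: 2; 3; 3; 3; 3; 3; 3; 3]; [:: 2; 3; 3; 3; 3; 3; 3; 3]; [:: 2; 3; 3; 3; 3; 3; 3; 3]; [:: 2; 3; 3; 3; 3; 3; 3; 3]; [:: 2; 3; 3; 3; 3; 3; 3; 3]]; [:: [:: 1; 3; 3; 3; 3; 3; 3; 3]; [:: 2; 3; 3; 3; 3; 3; 3; 3]; [:: 2; 3; 3; 3; 3; 3; 3; 3]; [:: 2; 3; 3; 3; 3; 3; 3; 3]; [:: 2; 3; 3; 3; 3; 3; 3; 3]; [:: 2; 3; 3; 3; 3; 3; 3; 3]; [:: 2; 3; 3; 3; 3; 3; 3; 3]; [:: 2; 3; 3; 3; 3; 3; 3; 3]]; [:: [:: 1; 3; 3; 3; 3; 3; 3; 3]; [:: 2; 3; 3; 3; 3; 3; 3; 3]; [:: 2; 3; 3; 3; 3; 3; 3; 3]; [:: 2; 3; 3;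 3; 3; 3; 3; 3]; [:: 2; 3; 3; 3; 3; 3; 3; 3]; [:: 2; 3; 3; 3; 3; 3; 3; 3]; [:: 2; 3; 3; 3; 3; 3; 3; 3]; [:: 2; 3; 3; 3; 3; 3; 3; 3]]; [:: [:: 1; 3; 3; 3; 3; 3; 3; 3]; [:: 2; 3; 3; 3; 3; 3; 3; 3]; [:: 2; 3; 3; 3; 3; 3; 3; 3]; [:: 2; 3; 3; 3; 3; 3; 3; 3]; [:: 2; 3; 3; 3; 3; 3; 3; 3]; [:: 2; 3; 3; 3; 3; 3; 3; 3]; [:: 2; 3; 3; 3; 3; 3; 3; 3]; [:: 2; 3; 3; 3; 3; 3; 3; 3]]; [:: [:: 1; 3; 3; 3; 3; 3; 3; 3]; [:: 2; 3; 3; 3; 3; 3; 3; 3]; [:: 2; 3; 3; 3; 3; 3; 3; 3]; [:: 2; 3; 3; 3; 3; 3; 3; 3]; [:: 2; 3; 3; 3; 3; 3; 3; 3]; [:: 2; 3; 3; 3; 3; 3; 3; 3]; [:: 2; 3; 3; 3; 3; 3; 3; 3]; [:: 2; 3; 3; 3; 3; 3; 3; 3]]]; [:: [:: [:: 0; 2; 2; 3; 2; 3; 3; 3]; [:: 2; 3; 3; 3; 3; 3; 3; 3]; [:: 2; 3; 3; 3; 3; 3; 3; 3]; [:: 2; 3; 3; 3; 3; 3; 3; 3]; [:: 2; 3; 3; 3; 3; 3; 3; 3]; [:: 2; 3; 3; 3; 3; 3; 3; 3]; [:: 2; 3; 3; 3; 3; 3; 3; 3]; [:: 2; 3; 3;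 3; 3; 3; 3; 3]]; [:: [:: 1; 3; 3; 3; 3; 3; 3; 3]; [:: 2; 3; 3; 3; 3; 3; 3; 3]; [:: 2; 3; 3; 3; 3; 3; 3; 3]; [:: 2; 3; 3; 3; 3; 3; 3; 3]; [:: 2; 3; 3; 3; 3; 3; 3; 3]; [:: 2; 3; 3; 3; 3; 3; 3; 3]; [:: 2; 3; 3; 3; 3; 3; 3; 3]; [:: 2; 3; 3; 3; 3; 3; 3; 3]]; [:: [:: 1; 3; 3; 3; 3; 3; 3; 3]; [:: 2; 3; 3; 3; 3; 3; 3; 3]; [:: 2; 3; 3; 3; 3; 3; 3; 3]; [:: 2; 3; 3; 3; 3; 3; 3; 3]; [:: 2; 3; 3; 3; 3; 3; 3; 3]; [:: 2; 3; 3; 3; 3; 3; 3; 3]; [:: 2; 3; 3; 3; 3; 3; 3; 3]; [:: 2; 3; 3; 3; 3; 3; 3; 3]]; [:: [:: 1; 3; 3; 3; 3; 3; 3; 3]; [:: 2; 3; 3; 3; 3; 3; 3; 3]; [:: 2; 3; 3; 3; 3; 3; 3; 3]; [:: 2; 3; 3; 3; 3; 3; 3; 3]; [:: 2; 3; 3; 3; 3; 3; 3; 3]; [:: 2; 3; 3; 3; 3; 3; 3; 3]; [:: 2; 3; 3; 3; 3; 3; 3; 3]; [:: 2; 3; 3; 3; 3; 3; 3; 3]]; [:: [:: 1; 3; 3; 3; 3; 3; 3; 3]; [:: 2; 3; 3; 3; 3; 3; 3; 3]; [:: 2; 3; 3; 3; 3; 3; 3; 3]; [:: 2; 3; 3;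 3; 3; 3; 3; 3]; [:: 2; 3; 3; 3; 3; 3; 3; 3]; [:: 2; 3; 3; 3; 3; 3; 3; 3]; [:: 2; 3; 3; 3; 3; 3; 3; 3]; [:: 2; 3; 3; 3; 3; 3; 3; 3]]; [:: [:: 1; 3; 3; 3; 3; 3; 3; 3]; [:: 2; 3; 3; 3; 3; 3; 3; 3]; [:: 2; 3; 3; 3; 3; 3; 3; 3]; [:: 2; 3; 3; 3; 3; 3; 3; 3]; [:: 2; 3; 3; 3; 3; 3; 3; 3]; [:: 2; 3; 3; 3; 3; 3; 3; 3]; [:: 2; 3; 3; 3; 3; 3; 3; 3]; [:: 2; 3; 3; 3; 3; 3; 3; 3]]; [:: [:: 1; 3; 3; 3; 3; 3; 3; 3]; [:: 2; 3; 3; 3; 3; 3; 3; 3]; [:: 2; 3; 3; 3; 3; 3; 3; 3]; [:: 2; 3; 3; 3; 3; 3; 3; 3]; [:: 2; 3; 3; 3; 3; 3; 3; 3]; [:: 2; 3; 3; 3; 3; 3; 3; 3]; [:: 2; 3; 3; 3; 3; 3; 3; 3]; [:: 2; 3; 3; 3; 3; 3; 3; 3]]; [:: [:: 1; 3; 3; 3; 3; 3; 3; 3]; [:: 2; 3; 3; 3; 3; 3; 3; 3]; [:: 2; 3; 3; 3; 3; 3; 3; 3]; [:: 2; 3; 3; 3; 3; 3; 3; 3]; [:: 2; 3; 3; 3; 3; 3; 3; 3]; [:: 2; 3; 3; 3; 3; 3; 3; 3]; [:: 2; 3; 3; 3; 3; 3; 3; 3]; [:: 2; 3; 3; 3; 3;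 3; 3; 3]]]; [:: [:: [:: 0; 2; 2; 3; 2; 3; 3; 3]; [:: 2; 3; 3; 3; 3; 3; 3; 3]; [:: 2; 3; 3; 3; 3; 3; 3; 3]; [:: 2; 3; 3; 3; 3; 3; 3; 3]; [:: 2; 3; 3; 3; 3; 3; 3; 3]; [:: 2; 3; 3; 3; 3; 3; 3; 3]; [:: 2; 3; 3; 3; 3; 3; 3; 3]; [:: 2; 3; 3; 3; 3; 3; 3; 3]]; [:: [:: 1; 3; 3; 3; 3; 3; 3; 3]; [:: 2; 3; 3; 3; 3; 3; 3; 3]; [:: 2; 3; 3; 3; 3; 3; 3; 3]; [:: 2; 3; 3; 3; 3; 3; 3; 3]; [:: 2; 3; 3; 3; 3; 3; 3; 3]; [:: 2; 3; 3; 3; 3; 3; 3; 3]; [:: 2; 3; 3; 3; 3; 3; 3; 3]; [:: 2; 3; 3; 3; 3; 3; 3; 3]]; [:: [:: 1; 3; 3; 3; 3; 3; 3; 3]; [:: 2; 3; 3; 3; 3; 3; 3; 3]; [:: 2; 3; 3; 3; 3; 3; 3; 3]; [:: 2; 3; 3; 3; 3; 3; 3; 3]; [:: 2; 3; 3; 3; 3; 3; 3; 3]; [:: 2; 3; 3; 3; 3; 3; 3; 3]; [:: 2; 3; 3; 3; 3; 3; 3; 3]; [:: 2; 3; 3; 3; 3; 3; 3; 3]]; [:: [:: 1; 3; 3; 3; 3; 3; 3; 3]; [:: 2; 3; 3; 3; 3; 3; 3; 3]; [:: 2; 3; 3; 3; 3; 3; 3; 3]; [:: 2; 3; 3; 3;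 3; 3; 3; 3]; [:: 2; 3; 3; 3; 3; 3; 3; 3]; [:: 2; 3; 3; 3; 3; 3; 3; 3]; [:: 2; 3; 3; 3; 3; 3; 3; 3]; [:: 2; 3; 3; 3; 3; 3; 3; 3]]; [:: [:: 1; 3; 3; 3; 3; 3; 3; 3]; [:: 2; 3; 3; 3; 3; 3; 3; 3]; [:: 2; 3; 3; 3; 3; 3; 3; 3]; [:: 2; 3; 3; 3; 3; 3; 3; 3]; [:: 2; 3; 3; 3; 3; 3; 3; 3]; [:: 2; 3; 3; 3; 3; 3; 3; 3]; [:: 2; 3; 3; 3; 3; 3; 3; 3]; [:: 2; 3; 3; 3; 3; 3; 3; 3]]; [:: [:: 1; 3; 3; 3; 3; 3; 3; 3]; [:: 2; 3; 3; 3; 3; 3; 3; 3]; [:: 2; 3; 3; 3; 3; 3; 3; 3]; [:: 2; 3; 3; 3; 3; 3; 3; 3]; [:: 2; 3; 3; 3; 3; 3; 3; 3]; [:: 2; 3; 3; 3; 3; 3; 3; 3]; [:: 2; 3; 3; 3; 3; 3; 3; 3]; [:: 2; 3; 3; 3; 3; 3; 3; 3]]; [:: [:: 1; 3; 3; 3; 3; 3; 3; 3]; [:: 2; 3; 3; 3; 3; 3; 3; 3]; [:: 2; 3; 3; 3; 3; 3; 3; 3]; [:: 2; 3; 3; 3; 3; 3; 3; 3]; [:: 2; 3; 3; 3; 3; 3; 3; 3]; [:: 2; 3; 3; 3; 3; 3; 3; 3]; [:: 2; 3; 3; 3; 3; 3; 3; 3]; [:: 2; 3; 3; 3; 3; 3;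 3; 3]]; [:: [:: 1; 3; 3; 3; 3; 3; 3; 3]; [:: 2; 3; 3; 3; 3; 3; 3; 3]; [:: 2; 3; 3; 3; 3; 3; 3; 3]; [:: 2; 3; 3; 3; 3; 3; 3; 3]; [:: 2; 3; 3; 3; 3; 3; 3; 3]; [:: 2; 3; 3; 3; 3; 3; 3; 3]; [:: 2; 3; 3; 3; 3; 3; 3; 3]; [:: 2; 3; 3; 3; 3; 3; 3; 3]]]].
Definition phi (c0 c1 c2 c3 : col) : nat :=
  nth 0 (nth [::] (nth [::] (nth [::] phi_tab (code c0)) (code c1)) (code c2)) (code c3).
Definition cols : seq col :=
  [:: (false,false,false); (true,false,false); (false,true,false); (true,true,false);
      (false,false,true); (true,false,true); (false,true,true); (true,true,true)].
Definition check :=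
  all (fun c0 => all (fun c1 => all (fun c2 => all (fun c3 => all (fun c4 =>
    validc c0 c1 c2 c3 c4 ==> (phi c1 c2 c3 c4 + 1 <= phi c0 c1 c2 c3 + 2 * wt c4))
    cols) cols) cols) cols) cols.
Lemma check_ok : check. Proof. by vm_compute. Qed.

Lemma all_cols c : c \in cols. Proof. by case: c => [[[] []] []]. Qed.

Lemma pot c0 c1 c2 c3 c4 : validc c0 c1 c2 c3 c4 ->
  phi c1 c2 c3 c4 + 1 <= phi c0 c1 c2 c3 + 2 * wt c4.
Proof.
have := check_ok; rewrite /check.
move=> /allP/(_ c0 (all_cols _))/allP/(_ c1 (all_cols _))/allP/(_ c2 (all_cols _)).
by move=> /allP/(_ c3 (all_cols _))/allP/(_ c4 (all_cols _))/implyP.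
Qed.

Lemma mem_ords3 (a : 'I_3) : a \in ords3.
Proof. by case: a => [[|[|[|//]]] p]. Qed.

Lemma adj3 (x y : 'I_3) : cycle_adj x y = (x != y).
Proof. by case: x => [[|[|[|//]]] ?]; case: y => [[|[|[|//]]] ?]. Qed.

Lemma ordS_val n (j : 'I_n) : val (ordS j) = if j.+1 == n then 0 else j.+1.
Proof.
rewrite /=; case: eqP => [->|ne]; first by rewrite modnn.
by rewrite modn_small // ltn_neqAle (introN eqP ne) ltn_ord.
Qed.

Lemma ord_pred_val n (j : 'I_n) : val (ord_pred j) = if val j == 0 then n.-1 else (val j).-1.
Proof.
rewrite /=; case: eqP => [->|ne]; first by rewrite add0n modn_small // prednK ?ltnn //; case: n j => [[]|].
have jn := ltn_ord j.
have -> : (j + n).-1 = (nat_of_ord j).-1 + n by move: ne; clear; rewrite -/(nat_of_ord j); lia.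
by rewrite modnDr modn_small // (leq_ltn_trans (leq_pred _) jn).
Qed.

Lemma ordS_neq n (j : 'I_n) : 1 < n -> ordS j != j.
Proof.
move=> hn; apply/negP => /eqP/(congr1 val); rewrite ordS_val.
case: eqP => [E|_ ]; last by move/eqP; rewrite -[_ == _]/(j.+1 == j) (gtn_eqF (ltnSn j)).
move=> j0; move: E; rewrite -j0 => E; by rewrite -E in hn.
Qed.

Lemma adjn n (hn : 1 < n) (i j : 'I_n) :
  cycle_adj i j = (j == ordS i) || (j == ord_pred i).
Proof.
rewrite /cycle_adj.
have e1 : (j == (i.+1 %% n) :> nat) = (j == ordS i) by [].
have e2 : (i == (j.+1 %% n) :> nat) = (j == ord_pred i).
  rewrite -[(_ == _ :> nat)]/(i == ordS j); apply/eqP/eqP => [->|->]; by rewrite ?ordSK ?ord_predK.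
rewrite e1 e2; case: eqP => [<-|_] //=.
have h1 := ordS_neq i hn; have h2 := ordS_neq (ord_pred i) hn.
rewrite ord_predK in h2.
by rewrite eq_sym (negbTE h1) (negbTE h2).
Qed.

Definition C n (S : {set 'I_3 * 'I_n}) (j : 'I_n) : col :=
  (((o0, j) \in S), ((o1, j) \in S), ((o2, j) \in S)).

Lemma getC n (S : {set 'I_3 * 'I_n}) j a : get (C S j) a = ((a, j) \in S).
Proof.
by case: a => [[|[|[|//]]] p]; rewrite /C /get /=; congr (_ \in S); congr (_, _); apply: val_inj.
Qed.

Lemma torusE n (hn : 1 < n) (x y : 'I_3 * 'I_n) : torus_3n n x y =
  ((x.1 == y.1) && ((y.2 == ordS x.2) || (y.2 == ord_pred x.2))) || ((x.2 == y.2) && (x.1 != y.1)).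
Proof. by rewrite /torus_3n /cart_adj adjn // adj3. Qed.

Definition Lst n (a : 'I_3) (j : 'I_n) : seq ('I_3 * 'I_n) :=
  [:: (a, ord_pred (ord_pred j)); (a, ordS (ordS j))] ++
  [seq (b, ord_pred j) | b <- ords3 & b != a] ++ [seq (b, ordS j) | b <- ords3 & b != a].

Lemma memL n a (j : 'I_n) c l :
  (c == a) && ((l == ord_pred (ord_pred j)) || (l == ordS (ordS j))) ||
  (c != a) && ((l == ord_pred j) || (l == ordS j)) -> (c, l) \in Lst a j.
Proof.
move/orP => [/andP [/eqP -> /orP [/eqP ->|/eqP ->]] | /andP [ca /orP [/eqP ->|/eqP ->]]];
  rewrite /Lst !mem_cat ?inE ?eqxx ?orbT //.
- by apply/orP; right; apply/orP; left; apply/mapP; exists c => //; rewrite mem_filter ca mem_ords3.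
- by apply/orP; right; apply/orP; right; apply/mapP; exists c => //; rewrite mem_filter ca mem_ords3.
Qed.

Lemma countL n (S : {set 'I_3 * 'I_n}) a j :
  count (fun x => x \in S) (Lst a j) =
  ((a, ord_pred (ord_pred j)) \in S) + ((a, ordS (ordS j)) \in S)
  + count (fun b => (b != a) && get (C S (ord_pred j)) b) ords3
  + count (fun b => (b != a) && get (C S (ordS j)) b) ords3.
Proof.
rewrite /Lst !count_cat !count_map !count_filter !addnA; rewrite [count _ [:: _; _]]/= addn0.
by rewrite !getC /= !addn0 ![(_ != a) && _]andbC.
Qed.

Lemma local_valid n (hn : 1 < n) S (hS : disj_dominating (torus_3n n) S) j :
  validc (C S (ord_pred (ord_pred j))) (C S (ord_pred j)) (C S j) (C S (ordS j))
         (C S (ordS (ordS j))).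
Proof.
apply/allP => a _; rewrite /cond.
have := forallP hS (a, j); rewrite !getC.
case: (boolP ((a, j) \in S)) => [_ //| notin] /implyP/(_ isT) /orP [H1|H2].
- case/card_gt0P: H1 => [[b k]]; rewrite !inE torusE //= => /andP [].
  move=> /orP [/andP [/eqP <- /orP [/eqP ->|/eqP ->]] | /andP [/eqP <- ab]] uS.
  + by rewrite uS ?orbT.
  + by rewrite uS ?orbT.
  + rewrite eq_sym in ab; have := mem_ords3 b; rewrite !inE.
    by case/or3P => /eqP E; subst b; rewrite ab uS ?orbT.
- apply/orP; right; apply/orP; right; apply/orP; right; apply/orP; right.
  rewrite -countL -size_filter (leq_trans H2) // (leq_trans _ (card_size _)) //.
  apply: subset_leq_card; apply/subsetP => -[c l].
  rewrite !inE => /andP [/andP [/andP [uv nvu] /existsP [[b k] /andP [vw wu]]] uS].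
  rewrite mem_filter uS /=; apply: memL.
  move: vw wu nvu uv; rewrite !torusE //=.
  move=> /orP [/andP [/eqP <- /orP [/eqP ->|/eqP ->]] | /andP [/eqP <- ab]].
  + move=> /orP [/andP [/eqP <- /orP [/eqP ->|/eqP ->]] | /andP [/eqP <- ac]].
    * by rewrite !eqxx ?orbT.
    * by rewrite ordSK !eqxx.
    * by rewrite [c == a]eq_sym ac !eqxx ?orbT ?andbT.
  + move=> /orP [/andP [/eqP <- /orP [/eqP ->|/eqP ->]] | /andP [/eqP <- ac]].
    * by rewrite ord_predK !eqxx.
    * by rewrite !eqxx ?orbT.
    * by rewrite [c == a]eq_sym ac !eqxx ?orbT ?andbT.
  + move=> /orP [/andP [/eqP <- /orP [/eqP ->|/eqP ->]] | /andP [/eqP <- bc]].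
    * by rewrite [b == a]eq_sym ab !eqxx ?orbT ?andbT.
    * by rewrite [b == a]eq_sym ab !eqxx ?orbT ?andbT.
    * rewrite eqxx /=; case: (eqVneq a c) => [<-|ac] /=; first by rewrite eqxx.
      by [].
Qed.

Lemma sum_shift n (F : 'I_n -> nat) : \sum_(j < n) F (ordS j) = \sum_(j < n) F j.
Proof. by rewrite [RHS](reindex_inj (@ordS_inj n)). Qed.

Lemma sum3 (f : 'I_3 -> nat) : \sum_(a < 3) f a = f o0 + f o1 + f o2.
Proof.
rewrite !big_ord_recl big_ord0 addn0 addnA.
by congr (f _ + f _ + f _); apply: val_inj.
Qed.

Lemma wt_sum n (S : {set 'I_3 * 'I_n}) : \sum_(j < n) wt (C S j) = #|S|.
Proof.
have -> : #|S| = \sum_(x : 'I_3 * 'I_n) (x \in S : nat).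
  by rewrite -sum1_card big_mkcond; apply: eq_bigr => x _; case: (x \in S).
have e : \sum_(j < n) wt (C S j) = \sum_(j < n) \sum_(a < 3) ((a, j) \in S : nat).
  by apply: eq_bigr => j _; rewrite sum3.
by rewrite e exchange_big pair_bigA /=; apply: eq_bigr => -[a j].
Qed.

Lemma lower n (hn : 1 < n) S : disj_dominating (torus_3n n) S -> n <= 2 * #|S|.
Proof.
move=> hS.
pose W j := phi (C S (ord_pred (ord_pred j))) (C S (ord_pred j)) (C S j) (C S (ordS j)).
have step j : W (ordS j) + 1 <= W j + (wt (C S (ordS (ordS j))) + wt (C S (ordS (ordS j)))).
  by rewrite /W ordSK addnn -mul2n; exact: pot (local_valid hn hS j).
have : \sum_(j < n) (W (ordS j) + 1) <= \sum_(j < n) (W j + (wt (C S (ordS (ordS j))) + wt (C S (ordS (ordS j))))).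
  by apply: leq_sum => j _; exact: step.
have s1 : \sum_(j < n) wt (C S (ordS (ordS j))) = \sum_(j < n) wt (C S j) :=
  etrans (sum_shift (fun j => wt (C S (ordS j)))) (sum_shift (fun j => wt (C S j))).
have s2 : \sum_(j < n) W (ordS j) = \sum_(j < n) W j := sum_shift W.
have e1 : \sum_(j < n) (W (ordS j) + 1) = \sum_(j < n) W j + n.
  by rewrite big_split s2 sum1_card card_ord.
have e2 : \sum_(j < n) (W j + (wt (C S (ordS (ordS j))) + wt (C S (ordS (ordS j))))) =
   \sum_(j < n) W j + (#|S| + #|S|).
  by rewrite big_split big_split s1 wt_sum.
by rewrite e1 e2 leq_add2l addnn -mul2n.
Qed.

Lemma bigmin_le_seq (I : eqType) (r : seq I) (P : pred I) (F : I -> nat) x i0 :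
  i0 \in r -> P i0 -> \big[minn/x]_(i <- r | P i) F i <= F i0.
Proof.
elim: r => [//|y r IH]; rewrite inE big_cons => /orP [/eqP <- ->|/IH h Pi].
  exact: geq_minl.
by case: (P y); [exact: leq_trans (geq_minr _ _) (h Pi) | exact: h Pi].
Qed.

Lemma bigmin_ge (I : finType) (P : pred I) (F : I -> nat) x m :
  m <= x -> (forall i, P i -> m <= F i) -> m <= \big[minn/x]_(i | P i) F i.
Proof.
move=> hx hF; apply: (big_ind (fun y => m <= y)) => // a b ha hb.
by rewrite leq_min ha hb.
Qed.

Definition S0 n : {set 'I_3 * 'I_n} := [set x : 'I_3 * 'I_n | (x.1 == o0) && ~~ odd (val x.2)].

Lemma sum_even n : \sum_(j < n) (~~ odd j : nat) = uphalf n.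
Proof.
rewrite -(big_mkord xpredT (fun j => (~~ odd j : nat))).
elim: n => [|n IH]; first by rewrite big_nil.
rewrite big_nat_recr //= IH !uphalf_half /=.
by case: (odd n); rewrite /= ?addn0 ?add0n ?addn1 ?uphalf_half.
Qed.

Lemma card_S0 n : #|S0 n| = uphalf n.
Proof.
rewrite -wt_sum -sum_even; apply: eq_bigr => j _.
by rewrite /C /wt !inE /=; case: (odd j).
Qed.

Lemma odd_predn m : 0 < m -> odd m.-1 = ~~ odd m.
Proof. by case: m => //= m _; rewrite negbK. Qed.

Lemma S0_dom n : 2 < n -> disj_dominating (torus_3n n) (S0 n).
Proof.
move=> hn; have hn1 : 1 < n by apply: ltnW.
apply/forallP => -[a j]; apply/implyP; rewrite inE /= negb_and negbK => H.
have predE : 0 < j -> (o0, ord_pred j) \in S0 n = odd j.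
  move=> j0; rewrite inE /= -[(_ + n).-1 %% n]/(val (ord_pred j)) ord_pred_val.
  by case: eqP => [E|_]; [move: j0; rewrite E | rewrite odd_predn // negbK].
have succE : odd j -> (o0, ordS j) \in S0 n.
  move=> oj; rewrite inE /= -[_.+1 %% n]/(val (ordS j)) ordS_val; case: eqP => //= _; by rewrite oj.
case: (eqVneq a o0) => [ha|ha].
- subst a; rewrite eqxx /= in H.
  have j0 : 0 < j by case: (nat_of_ord j) H.
  apply/orP; left; apply/card_gt0P; exists (o0, ord_pred j).
  by rewrite in_setI predE // H andbT inE torusE //= !eqxx ?orbT.
- case: (boolP (odd j)) => oj.
  + have j0 : 0 < j by case: (nat_of_ord j) oj.
    have neq : ord_pred j != ordS j.
      apply/eqP => /(congr1 val); rewrite ord_pred_val ordS_val.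
      case: eqP => [E|_]; first by move: j0; rewrite E.
      case: eqP => E; move: E j0 hn (ltn_ord j); change (val j) with (nat_of_ord j); lia.
    apply/orP; right.
    apply: leq_trans (_ : #|[set (o0, ord_pred j); (o0, ordS j)]| <= _).
      by rewrite cards2 xpair_eqE eqxx /= neq.
    apply: subset_leq_card; apply/subsetP => u.
    move=> /set2P [->|->]; rewrite in_setI ?predE ?succE // ?oj andbT inE !torusE //= !xpair_eqE.
    * rewrite eq_sym (negbTE ha) /=.
      have h1 : j != ord_pred j by rewrite -{1}(ord_predK j) ordS_neq.
      rewrite (negbTE h1) /=; apply/existsP; exists (o0, j).
      by rewrite !torusE //= eqxx ha !eqxx ?orbT.
    * rewrite eq_sym (negbTE ha) /=.
      have h1 : j != ordS j by rewrite eq_sym ordS_neq.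
      rewrite (negbTE h1) /=; apply/existsP; exists (o0, j).
      by rewrite !torusE //= eqxx ha !eqxx ?orbT.
  + apply/orP; left; apply/card_gt0P; exists (o0, j).
    by rewrite !inE torusE //= eqxx oj ha ?orbT.
Qed.

Theorem theorem2 (n : nat) : 3 <= n ->
  disj_dom_number (torus_3n n) = uphalf n.
Proof.
move=> hn; have hn1 : 1 < n by apply: ltnW.
apply/eqP; rewrite eqn_leq; apply/andP; split.
- rewrite -card_S0; exact: bigmin_le_seq (mem_index_enum _) (S0_dom hn).
- apply: bigmin_ge => [|S hS].
    by rewrite card_prod !card_ord leq_uphalf_double -addnn; lia.
  by rewrite leq_uphalf_double -mul2n; exact: lower hn1 S hS.
Qed.
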